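(* A random choice rule $p$ with a habit formation logit representation $(v,c)$ satisfies independence of irrelevant alternatives if and only if $c(x)=0$ for all $x\in X$.
   Context: $X$ is a finite set containing an outside option $o$; choice sets are the subsets $A\subseteq X$ containing $o$. Given $v:X\to\mathbb{R}$ and $c:X\to\mathbb{R}_{\ge0}$ with $v(o)=c(o)=0$, for each choice set $A$ define the Markov chain on $A$ with transition probabilities $p(x,A\mid y)=\frac{e^{v(x)+c(x)\mathbf{1}\{x=y\}}}{\sum_{z\in A}e^{v(z)+c(z)\mathbf{1}\{z=y\}}}$ (from $y$ to $x$). A random choice rule $p$ has a habit formation logit representation $(v,c)$ if for every choice set $A$, $p(\cdot,A)$ is the (unique) stationary distribution of this chain. $p$ satisfies independence of irrelevant alternatives (IIA) if for all choice sets $A,B$ and $x,y\in A\cap B$, $\frac{p(x,A)}{p(y,A)}=\frac{p(x,B)}{p(y,B)}$. *)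

(* Defs.v *)
From mathcomp Require Import all_boot all_order all_algebra.
From mathcomp Require Import all_classical all_reals all_analysis.
Set Implicit Arguments. Unset Strict Implicit. Unset Printing Implicit Defensive.
Import Order.TTheory GRing.Theory Num.Theory.
Local Open Scope ring_scope.

Section HFL.
Variables (R : realType) (X : finType).

(* transition probability from y to x in the chain on choice set A *)
Definition hfl_trans (v c : X -> R) (A : {set X}) (y x : X) : R :=
  expR (v x + (if x == y then c x else 0)) /
  \sum_(z in A) expR (v z + (if z == y then c z else 0)).

Definition hfl_stationary (v c : X -> R) (A : {set X}) (q : X -> R) : Prop :=
  [/\ (forall x, x \in A -> 0 <= q x),
      \sum_(x in A) q x = 1
    & (forall x, x \in A -> q x = \sum_(y in A) q y * hfl_trans v c A y x)].

(* p x A = p(x, A); choice sets are the A : {set X} with o \in A *)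
Definition hfl_logit_rep (o : X) (p : X -> {set X} -> R) (v c : X -> R) : Prop :=
  [/\ v o = 0, c o = 0, (forall x, 0 <= c x)
    & forall A : {set X}, o \in A -> hfl_stationary v c A (fun x => p x A)].

Definition IIA (o : X) (p : X -> {set X} -> R) : Prop :=
  forall A B : {set X}, o \in A -> o \in B ->
  forall x y, x \in A :&: B -> y \in A :&: B ->
    p x A / p y A = p x B / p y B.

End HFL.

(* Main.v *)
Require Import Defs.
From mathcomp Require Import all_boot all_order all_algebra.
From mathcomp Require Import all_classical all_reals all_analysis.
From mathcomp Require Import ring lra zify.
Set Implicit Arguments. Unset Strict Implicit.
Import Order.TTheory GRing.Theory Num.Theory.
Local Open Scope ring_scope.

Section S.
Variables (R : realType) (X : finType).
Implicit Types (v c : X -> R) (A : {set X}).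

Definition DD v c A (x : X) : R := \sum_(z in A) expR (v z + (if z == x then c z else 0)).
Definition SS v A : R := \sum_(z in A) expR (v z).

Lemma DD_split v c A x : x \in A ->
  DD v c A x = expR (v x + c x) + \sum_(z in A | z != x) expR (v z).
Proof.
move=> xA; rewrite /DD (bigD1 x) //= eqxx; congr (_ + _).
by apply: eq_bigr => z /andP[_ /negPf ->]; rewrite addr0.
Qed.

Lemma SS_split v A x : x \in A ->
  SS v A = expR (v x) + \sum_(z in A | z != x) expR (v z).
Proof. by move=> xA; rewrite /SS (bigD1 x). Qed.

Lemma DD_gt0 v c A x : x \in A -> 0 < DD v c A x.
Proof.
move=> xA; rewrite DD_split //; apply: ltr_wpDr; last exact: expR_gt0.
by apply: sumr_ge0 => z _; apply: ltW; apply: expR_gt0.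
Qed.

Lemma SS_gt0 v A x : x \in A -> 0 < SS v A.
Proof.
move=> xA; rewrite (@SS_split v A x xA); apply: ltr_wpDr; last exact: expR_gt0.
by apply: sumr_ge0 => z _; apply: ltW; apply: expR_gt0.
Qed.

Lemma stat_form v c A q : hfl_stationary v c A q ->
  exists K, K != 0 /\ forall x, x \in A -> q x = K * expR (v x) * DD v c A x.
Proof.
case=> q0 q1 qst.
have [x0 x0A] : exists x, x \in A.
  apply/existsP; apply: contraT; rewrite negb_exists => /forallP H.
  move: q1; rewrite big1; first by move/eqP; rewrite eq_sym oner_eq0.
  by move=> i iA; move: (H i); rewrite iA.
set K' := \sum_(y in A) q y / DD v c A y.
have Sg := @SS_gt0 v A x0 x0A.
have form : forall x, x \in A -> q x = K' / SS v A * expR (v x) * DD v c A x.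
  move=> x xA.
  have Dg := @DD_gt0 v c A x xA.
  set T := \sum_(y in A | y != x) q y / DD v c A y.
  set U := \sum_(z in A | z != x) expR (v z).
  set E := expR (v x + c x).
  set e := expR (v x).
  have HK : K' = q x / DD v c A x + T by rewrite /K' (bigD1 x).
  have HD : DD v c A x = E + U by rewrite (@DD_split v c A x).
  have HS : SS v A = e + U by rewrite (@SS_split v A x).
  have Hq : q x = q x * (E / DD v c A x) + e * T.
    rewrite {1}(qst x xA) (bigD1 x) //= /hfl_trans eqxx; congr (_ + _).
    rewrite mulr_sumr; apply: eq_bigr => y /andP[_ yx].
    rewrite [x == y]eq_sym (negPf yx) addr0 -/(DD v c A y) -/e; by rewrite mulrCA mulrA.
  have eT : e * T = q x - q x * E / DD v c A x.
    by rewrite {1}Hq; ring.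
  have -> : K' / SS v A * e * DD v c A x = (q x * e / DD v c A x + e * T) * DD v c A x / SS v A.
    by rewrite HK; field; apply/andP; split; rewrite gt_eqF.
  rewrite eT HS; move: Dg; rewrite HD => Dg.
  field.
  by rewrite (gt_eqF Dg) -HS (gt_eqF Sg).
exists (K' / SS v A); split=> //.
apply/negP => /eqP K0.
move: q1; rewrite big1; first by move/eqP; rewrite eq_sym oner_eq0.
by move=> i iA; rewrite form // K0 !mul0r.
Qed.


Lemma DD_SS v c A x : x \in A -> DD v c A x = SS v A + (expR (v x + c x) - expR (v x)).
Proof.
move=> xA; rewrite (@DD_split v c A x) // (@SS_split v A x) //; ring.
Qed.

Lemma ratio o p v c A x y : hfl_logit_rep o p v c -> o \in A -> x \in A -> y \in A ->
  p x A / p y A = expR (v x) * DD v c A x / (expR (v y) * DD v c A y).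
Proof.
case=> _ _ _ st oA xA yA.
have [K [K0 HK]] := @stat_form v c A _ (st A oA).
rewrite !HK //.
have := @DD_gt0 v c A y yA; have := expR_gt0 (v y) => h1 h2.
field; rewrite K0 (gt_eqF h1) (gt_eqF h2) //.
Qed.

End S.

Theorem proposition4 (R : realType) (X : finType) (o : X)
  (p : X -> {set X} -> R) (v c : X -> R) :
  (3 <= #|X|)%N ->
  hfl_logit_rep o p v c ->
  (IIA o p <-> forall x : X, c x = 0).
Proof.
move=> X3 rep; have rep' := rep; case: rep' => vo co cge st.
split; last first.
  move=> c0 A B oA oB x y; rewrite !inE => /andP[xA xB] /andP[yA yB].
  rewrite (ratio rep) // (ratio rep) //.
  rewrite !DD_SS // !c0 !addr0 !subrr !addr0.
  have := @SS_gt0 _ _ v A o oA; have := @SS_gt0 _ _ v B o oB => h1 h2.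
  have := expR_gt0 (v y) => h3.
  by field; rewrite (gt_eqF h1) (gt_eqF h2) (gt_eqF h3).
move=> iia x.
have [->|xo] := eqVneq x o; first by [].
case: (pickP (fun z => z \notin [set o; x])) => [z Hz|H]; last first.
  have : [set: X]%SET \subset [set o; x].
    by apply/fintype.subsetP => z _; move: (H z) => /= /negbFE.
  move/subset_leq_card; rewrite cardsT cards2.
  by case: (o != x) X3 => /=; lia.
set A := [set o; x].
set B := z |: A.
have oA : o \in A by rewrite !inE eqxx.
have xA : x \in A by rewrite !inE eqxx orbT.
have oB : o \in B by rewrite !inE eqxx orbT.
have xB : x \in B by rewrite !inE eqxx !orbT.
have xAB : x \in A :&: B by rewrite finset.in_setI xA xB.
have oAB : o \in A :&: B by rewrite finset.in_setI oA oB.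
have := iia A B oA oB x o xAB oAB.
rewrite (ratio rep) // (ratio rep) //.
rewrite !DD_SS // co addr0 subrr !addr0.
have SB : SS v B = expR (v z) + SS v A by rewrite /SS big_setU1.
rewrite SB.
set d := expR (v x + c x) - expR (v x).
set SA := SS v A.
have hA := @SS_gt0 _ _ v A o oA.
have hz := expR_gt0 (v z).
have hx := expR_gt0 (v x).
have ho := expR_gt0 (v o).
move/eqP; rewrite eqr_div; first last.
- by rewrite mulf_neq0 // gt_eqF // addr_gt0.
- by rewrite mulf_neq0 // gt_eqF.
move/eqP => H2.
have : d * (expR (v x) * expR (v o) * expR (v z)) = 0.
  have -> : d * (expR (v x) * expR (v o) * expR (v z)) =
    expR (v x) * (SA + d) * (expR (v o) * (expR (v z) + SA)) -
    expR (v x) * (expR (v z) + SA + d) * (expR (v o) * SA) by ring.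
  by rewrite H2 subrr.
have ne : expR (v x) * expR (v o) * expR (v z) != 0.
  by rewrite !mulf_neq0 // gt_eqF.
move/eqP; rewrite mulf_eq0 (negPf ne) orbF subr_eq0 => /eqP /expR_inj h.
by have := congr1 (fun t => t - v x) h; rewrite /= addrC addKr subrr.
Qed.
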